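(* Consider a shallow ReLU network without biases with widths $n_0,n_1,n_2$ and activation patterns $A_1,\dots,A_k\in\{0,1\}^{n_1}$. For every $\lambda\in\mathbb{Z}^k$, the ideal $J^{\mathbf{A}}$ contains all $\big(|\operatorname{supp}(\sum_{i\in[k]}\lambda_iA_i)|+1\big)$-minors of the matrix $\sum_{i\in[k]}\lambda_iM_i$.
   Context: Parameters are $W^{(1)}\in\mathbb{R}^{n_1\times n_0}$, $W^{(2)}\in\mathbb{R}^{n_2\times n_1}$, and $M_A(\theta)=W^{(2)}\operatorname{diag}(A)W^{(1)}$. $J^{\mathbf{A}}\subseteq\mathbb{C}[m^{(i)}_{jl}: i\in[k], j\in[n_2], l\in[n_0]]$ is the ideal of all polynomials vanishing on the Zariski closure in $(\mathbb{C}^{n_2\times n_0})^k$ of $\{(M_{A_1}(\theta),\dots,M_{A_k}(\theta)):\theta\}$, where $M_i=(m^{(i)}_{jl})$ are coordinate matrices. $\operatorname{supp}(v)$ is the set of nonzero coordinates of $v\in\mathbb{Z}^{n_1}$. *)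

(* Defs.v *)
From HB Require Import structures.
From mathcomp Require Import all_boot all_order all_algebra.
From mathcomp Require Import mpoly.
From mathcomp Require Import complex.
Set Implicit Arguments. Unset Strict Implicit. Unset Printing Implicit Defensive.
Import Order.TTheory GRing.Theory Num.Theory.
Local Open Scope ring_scope.

(* Index type of the coordinates m^{(i)}_{jl}, i in [k], j in [n2], l in [n0]. *)
Definition coordT (k n2 n0 : nat) : finType := ('I_k * 'I_n2 * 'I_n0)%type.
Definition nvars (k n2 n0 : nat) : nat := #|{: coordT k n2 n0}|.

(* The polynomial ring C[m^{(i)}_{jl}], with C = R[i] for a real closed field R
   (for R the real numbers this is the usual complex numbers). *)
Definition polyring (R : rcfType) (k n2 n0 : nat) :=
  {mpoly (complex R)[nvars k n2 n0]}.

Definition mvar (R : rcfType) (k n2 n0 : nat) (i : 'I_k) (j : 'I_n2) (l : 'I_n0)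
  : polyring R k n2 n0 := 'X_(enum_rank ((i, j, l) : coordT k n2 n0)).

Definition Mcoord (R : rcfType) (k n2 n0 : nat) (i : 'I_k)
  : 'M[polyring R k n2 n0]_(n2, n0) := \matrix_(j, l) mvar R i j l.

(* A point of (C^{n2 x n0})^k, encoded as a valuation of the variables. *)
Definition point (R : rcfType) (k n2 n0 : nat)
  (Ms : 'I_k -> 'M[complex R]_(n2, n0)) : 'I_(nvars k n2 n0) -> complex R :=
  fun r => let: (i, j, l) := enum_val r in Ms i j l.

Definition MA (R : rcfType) (n0 n1 n2 : nat) (A : 'I_n1 -> bool)
  (W1 : 'M[R]_(n1, n0)) (W2 : 'M[R]_(n2, n1)) : 'M[R]_(n2, n0) :=
  W2 *m diag_mx (\row_j ((A j)%:R : R)) *m W1.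

Definition realC (R : rcfType) (x : R) : complex R := Complex x 0.

Definition image_set (R : rcfType) (k n0 n1 n2 : nat) (As : 'I_k -> 'I_n1 -> bool)
  (x : 'I_(nvars k n2 n0) -> complex R) : Prop :=
  exists (W1 : 'M[R]_(n1, n0)) (W2 : 'M[R]_(n2, n1)),
    x =1 point (fun i => map_mx (@realC R) (MA (As i) W1 W2)).

Definition vanishes_on (F : comNzRingType) (N : nat) (S : ('I_N -> F) -> Prop)
  (p : {mpoly F[N]}) : Prop := forall x, S x -> p.@[x] = 0.

Definition zariski_closure (F : comNzRingType) (N : nat) (S : ('I_N -> F) -> Prop)
  : ('I_N -> F) -> Prop := fun x => forall p, vanishes_on S p -> p.@[x] = 0.

Definition JA (R : rcfType) (k n0 n1 n2 : nat) (As : 'I_k -> 'I_n1 -> bool)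
  : polyring R k n2 n0 -> Prop :=
  vanishes_on (zariski_closure (@image_set R k n0 n1 n2 As)).

Definition supp (n : nat) (v : 'I_n -> int) : {set 'I_n} := [set j | v j != 0].

Definition is_minor (T : comNzRingType) (m n r : nat) (M : 'M[T]_(m, n)) (x : T) : Prop :=
  exists (f : 'I_r -> 'I_m) (g : 'I_r -> 'I_n),
    {homo f : a b / (a < b)%N >-> (a < b)%N} /\
    {homo g : a b / (a < b)%N >-> (a < b)%N} /\
    x = \det (mxsub f g M).

(* Main.v *)
Require Import Defs.
From HB Require Import structures.
From mathcomp Require Import all_boot all_order all_algebra.
From mathcomp Require Import mpoly.
From mathcomp Require Import complex.
Import Order.TTheory GRing.Theory Num.Theory.
Local Open Scope ring_scope.

Lemma rank_sum_le (F : fieldType) m n (I : Type) (r : seq I) (P : pred I)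
  (A : I -> 'M[F]_(m, n)) :
  (\rank (\sum_(i <- r | P i) A i)%R <= \sum_(i <- r | P i) \rank (A i))%N.
Proof.
elim: r => [|a r IH]; first by rewrite !big_nil mxrank0.
rewrite !big_cons; case: (P a) => //.
by apply: leq_trans (mxrank_add _ _) _; rewrite leq_add2l.
Qed.

Lemma rank_diag_le (F : fieldType) n (d : 'rV[F]_n) :
  (\rank (diag_mx d) <= #|[pred i | d ord0 i != 0%R]|)%N.
Proof.
rewrite diag_mx_sum_delta (bigID (fun i => d 0 i == 0)) /=.
rewrite big1 ?add0r; last by move=> i /eqP ->; rewrite scale0r.
apply: leq_trans (rank_sum_le _ _ _ _ _ _ _) _.
rewrite -sum1_card; apply: leq_sum => i _.
by apply: leq_trans (mxrank_scale _ _) _; rewrite mxrank_delta.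
Qed.

Lemma minor_zero (F : fieldType) n0 n1 n2 (W1 : 'M[F]_(n1, n0))
  (W2 : 'M[F]_(n2, n1)) (d : 'rV[F]_n1) r (f : 'I_r -> 'I_n2) (g : 'I_r -> 'I_n0) :
  (#|[pred i | d ord0 i != 0%R]| < r)%N ->
  \det (mxsub f g (W2 *m diag_mx d *m W1)) = 0.
Proof.
move=> hr.
have hrk : (\rank (mxsub f g (W2 *m diag_mx d *m W1)) < r)%N.
  rewrite mxsub_mul; apply: leq_ltn_trans (mxrankM_maxl _ _) _.
  rewrite -mul_rowsub_mx.
  apply: leq_ltn_trans (mxrankM_maxr _ _) _.
  by apply: leq_ltn_trans (rank_diag_le _ _ _) hr.
apply/eqP; apply: contraTT hrk => hdet.
have : mxsub f g (W2 *m diag_mx d *m W1) \in unitmx by rewrite unitmxE unitfE.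
by rewrite -row_free_unit /row_free => /eqP ->; rewrite ltnn.
Qed.

Theorem theorem7p1 (R : rcfType) (n0 n1 n2 k : nat)
  (As : 'I_k -> 'I_n1 -> bool) (lam : 'I_k -> int) (x : polyring R k n2 n0) :
  is_minor (#|supp (fun j => \sum_(i < k) lam i * (As i j)%:R)|.+1)
    (\sum_(i < k) (lam i)%:~R *: @Mcoord R k n2 n0 i) x ->
  @JA R k n0 n1 n2 As x.
Proof.
move=> [f [g [_ [_ ->]]]] y Hy; apply: Hy => z [W1 [W2 Hz]].
rewrite (meval_eq _ Hz).
set v := point _.
set d : 'rV[R]_n1 := \sum_(i < k) (lam i)%:~R *: \row_j ((As i j)%:R : R).
set P := W2 *m diag_mx d *m W1.
have EP : map_mx (meval v) (\sum_(i < k) (lam i)%:~R *: @Mcoord R k n2 n0 i)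
          = map_mx (real_complex R) P.
  have EP0 : P = \sum_(i < k) (lam i)%:~R *: MA (As i) W1 W2.
    rewrite /P /d raddf_sum mulmx_sumr mulmx_suml; apply: eq_bigr => i _.
    change (W2 *m diag_mx ((lam i)%:~R *: \row_j ((As i j)%:R : R)) *m W1 = (lam i)%:~R *: MA (As i) W1 W2).
    by rewrite (diag_mx_is_scalable (lam i)%:~R) -scalemxAr -scalemxAl.
  rewrite EP0; apply/matrixP => j l; rewrite !mxE !summxE raddf_sum rmorph_sum.
  apply: eq_bigr => i _.
  rewrite !mxE. rewrite /= mevalM rmorphM /= !rmorph_int /mvar mevalXU /v /point enum_rankK.
  by rewrite !mxE.
rewrite -det_map_mx map_mxsub EP -map_mxsub det_map_mx.
rewrite (minor_zero _ _ _ _ _ _ d) ?rmorph0 //.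
rewrite ltnS /supp cardsE; apply/eq_leq/eq_card => j /=.
rewrite inE /d summxE -topredE /= -(intr_eq0 R) rmorph_sum /=.
congr (_ != 0); apply: eq_bigr => i _.
by rewrite !mxE intrM rmorph_nat.
Qed.
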